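(* Let $V$ be a real vector space with basis $e^1,\dots,e^k$ and a nondegenerate symmetric bilinear form $q_1$ with Gram matrix $G=(G^{ab})$, $G^{ab}=q_1(e^a,e^b)$. For real $k\times k$ matrices $X,Y$ put $[X,Y]_G:=XGY-YGX$ and $\{X,Y\}_G:=XGY+YGX$. Let $X:\lambda\to\mathbb{R}^{k\times k}$ be a map taking values in symmetric matrices such that for all $\alpha,\beta\in\lambda$: $[X(\alpha),X(\beta)]_G=0$ if $(\alpha|\beta)=0$, and $\{X(\alpha),X(\beta)\}_G=\frac12 X(\alpha\pm\beta)$ if $(\alpha|\beta)=\mp1$ and $\alpha\pm\beta\in\lambda$. Let $\mathcal{S}$ be the Clifford algebra of $V\otimes S$ defined below, with elements $\phi^a_\gamma=e^a\otimes f_\gamma$, and put $$\widehat{J}(\alpha_i):=\sum_{a,b=1}^k\sum_{\gamma,\delta=1}^l X(\alpha_i)_{ab}\,\Gamma(\alpha_i)_{\gamma\delta}\,\phi^a_\gamma\phi^b_\delta\in\mathcal S.$$ Then the assignment $X_i\mapsto\widehat J(\alpha_i)$ extends to a Lie algebra homomorphism from $\mathfrak k$ into $\mathcal S$ (with bracket the commutator $uv-vu$), and hence defines a finite-dimensional representation $\sigma$ of $\mathfrak k$ with $\sigma(X_i)=\widehat J(\alpha_i)$.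
   Context: Let $A=(a_{ij})_{1\le i,j\le n}$ be a symmetrizable simply laced generalized Cartan matrix (off-diagonal entries $0$ or $-1$); the Dynkin diagram has an edge between $i\ne j$ iff $a_{ij}=-1$. Let $\mathfrak g$ be the split real Kac–Moody algebra of $A$ with Chevalley generators $e_i,f_i$, Cartan subalgebra $\mathfrak h$ (from a real realization), simple roots $\alpha_1,\dots,\alpha_n\in\mathfrak h^*$, and let $(\cdot|\cdot)$ be the nondegenerate invariant symmetric bilinear form induced on $\mathfrak h^*$, with $(\alpha_i|\alpha_j)=a_{ij}$. Let $\mathfrak k$ be the fixed-point subalgebra of the Chevalley involution ($e_i\mapsto -f_i$, $f_i\mapsto-e_i$, $h\mapsto -h$), with Berman generators $X_i=e_i-f_i$; $\mathfrak k$ is presented by generators $X_1,\dots,X_n$ and relations $[X_i,[X_i,X_j]]=-X_j$ if $a_{ij}=-1$, $[X_i,X_j]=0$ if $a_{ij}=0$. Let $\lambda$ be the set of real roots consisting of the simple roots $\alpha_1,\dots,\alpha_n$ together with all $\alpha_i+\alpha_j$ for $i,j$ forming an edge of the Dynkin diagram. A generalized spin representation is a representation $\rho$ of $\mathfrak k$ with $\rho(X_i)^2=-\frac14\mathrm{id}$ for all $i$. Fix a finite-dimensional real vector space $S$ with positive definite inner product $q_2$ and orthonormal basis $f_1,\dots,f_l$, and a generalized spin representation $\rho:\mathfrak k\to\mathrm{End}(S)$ whose values $\rho(X_i)$ are anti-symmetric real matrices with respect to this basis (such exist, e.g. by realifying the generalized spin representations with compact image constructed by Hainke–Köhl–Levy);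 put $\Gamma(\alpha_i):=2\rho(X_i)$, an anti-symmetric real $l\times l$ matrix with entries $\Gamma(\alpha_i)_{\gamma\delta}$. Let $q=q_1\otimes q_2$ be the symmetric bilinear form on $V\otimes S$ with $q(e^a\otimes f_\gamma,e^b\otimes f_\delta)=G^{ab}\delta_{\gamma\delta}$, and let $\mathcal S$ be the Clifford algebra: the tensor algebra of $V\otimes S$ modulo the ideal generated by $w\otimes w-\frac12 q(w,w)\cdot 1$, so that $vw+wv=q(v,w)$ in $\mathcal S$. *)

(* Defs.v *)
From HB Require Import structures.
From mathcomp Require Import all_boot all_order all_algebra.
From mathcomp Require Import reals.
Set Implicit Arguments. Unset Strict Implicit. Unset Printing Implicit Defensive.
Import Order.TTheory GRing.Theory Num.Theory.
Local Open Scope ring_scope.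

Record lie_alg (R : pzRingType) := LieAlg {
  lie_car :> lmodType R;
  lie_br : lie_car -> lie_car -> lie_car;
  lie_brDl : forall (a : R) x y z, lie_br (a *: x + y) z = a *: lie_br x z + lie_br y z;
  lie_brDr : forall (a : R) x y z, lie_br z (a *: x + y) = a *: lie_br z x + lie_br z y;
  lie_alt : forall x, lie_br x x = 0;
  lie_jacobi : forall x y z,
    lie_br x (lie_br y z) + lie_br y (lie_br z x) + lie_br z (lie_br x y) = 0 }.

Definition lie_morph (R : pzRingType) (K : lie_alg R) (M : lmodType R)
  (brM : M -> M -> M) (f : K -> M) : Prop :=
  (forall (a : R) (x y : K), f (a *: x + y) = a *: f x + f y) /\
  (forall x y : K, f (lie_br x y) = brM (f x) (f y)).

(* Simply laced generalized Cartan matrix (hence symmetric, so symmetrizable). *)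
Definition simply_laced_gcm (n : nat) (A : 'M[int]_n) : Prop :=
  (forall i, A i i = 2) /\
  (forall i j, i != j -> A i j = 0 \/ A i j = -1) /\
  (forall i j, (A i j == 0) = (A j i == 0)).

(* Defining relations of k (Berman presentation) for elements y_i of L. *)
Definition k_relations (R : pzRingType) (n : nat) (A : 'M[int]_n)
  (L : lie_alg R) (y : 'I_n -> L) : Prop :=
  forall i j,
    (A i j = -1 -> lie_br (y i) (lie_br (y i) (y j)) = - y j) /\
    (A i j = 0 -> lie_br (y i) (y j) = 0).

Definition is_presented_k (R : pzRingType) (n : nat) (A : 'M[int]_n)
  (K : lie_alg R) (Xk : 'I_n -> K) : Prop :=
  k_relations A Xk /\
  forall (L : lie_alg R) (y : 'I_n -> L), k_relations A y ->
    exists! f : K -> L, lie_morph (@lie_br R L) f /\ forall i, f (Xk i) = y i.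

(* Elements of the root lattice are coordinate vectors w.r.t. the simple roots;
   alpha_i = simple_root i. *)
Definition simple_root (n : nat) (i : 'I_n) : 'rV[int]_n := delta_mx 0 i.

Definition rootform (n : nat) (A : 'M[int]_n) (al be : 'rV[int]_n) : int :=
  \sum_i \sum_j al 0 i * A i j * be 0 j.

Definition in_lambda (n : nat) (A : 'M[int]_n) (al : 'rV[int]_n) : bool :=
  [exists i, al == simple_root i] ||
  [exists i, exists j, (A i j == -1) && (al == simple_root i + simple_root j)].

Definition brG (R : pzRingType) (k : nat) (G X Y : 'M[R]_k) : 'M[R]_k :=
  X *m G *m Y - Y *m G *m X.
Definition acomG (R : pzRingType) (k : nat) (G X Y : 'M[R]_k) : 'M[R]_k :=
  X *m G *m Y + Y *m G *m X.

(* Clifford relations for generators phi a g = e^a (x) f_g of V (x) S, with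
   q(e^a (x) f_g, e^b (x) f_d) = G^{ab} delta_{gd}:  vw + wv = q(v,w). *)
Definition clifford_rel (R : pzRingType) (k l : nat) (G : 'M[R]_k)
  (B : algType R) (psi : 'I_k -> 'I_l -> B) : Prop :=
  forall a g b d, psi a g * psi b d + psi b d * psi a g = (G a b * (g == d)%:R)%:A.

Definition alg_morph (R : pzRingType) (A B : algType R) (f : A -> B) : Prop :=
  (forall (c : R) (x y : A), f (c *: x + y) = c *: f x + f y) /\
  (forall x y : A, f (x * y) = f x * f y) /\ f 1 = 1.

Definition is_clifford (R : pzRingType) (k l : nat) (G : 'M[R]_k)
  (Aalg : algType R) (phi : 'I_k -> 'I_l -> Aalg) : Prop :=
  clifford_rel G phi /\
  forall (B : algType R) (psi : 'I_k -> 'I_l -> B), clifford_rel G psi ->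
    exists! f : Aalg -> B, alg_morph f /\ forall a g, f (phi a g) = psi a g.

Definition Jhat (R : pzRingType) (k l : nat) (Aalg : algType R)
  (phi : 'I_k -> 'I_l -> Aalg) (Xa : 'M[R]_k) (Ga : 'M[R]_l) : Aalg :=
  \sum_(a < k) \sum_(b < k) \sum_(g < l) \sum_(d < l)
     (Xa a b * Ga g d) *: (phi a g * phi b d).

Definition commutator (R : pzRingType) (Aalg : algType R) (u v : Aalg) : Aalg :=
  u * v - v * u.

(* Main.v *)
Require Import Defs.
From HB Require Import structures.
From mathcomp Require Import all_boot all_order all_algebra.
From mathcomp Require Import reals.
From mathcomp Require Import ring lra.
Import Order.TTheory GRing.Theory Num.Theory.
Set Implicit Arguments. Unset Strict Implicit. Unset Printing Implicit Defensive.
Local Open Scope ring_scope.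


Lemma comm_brDl (R : fieldType) (B : algType R) (a : R) (x y z : B) :
  commutator (a *: x + y) z = a *: commutator x z + commutator y z.
Proof.
rewrite /commutator mulrDl mulrDr -scalerAl -scalerAr scalerBr.
by rewrite addrACA opprD.
Qed.

Lemma comm_brDr (R : fieldType) (B : algType R) (a : R) (x y z : B) :
  commutator z (a *: x + y) = a *: commutator z x + commutator z y.
Proof.
rewrite /commutator mulrDl mulrDr -scalerAl -scalerAr scalerBr.
by rewrite addrACA opprD.
Qed.

Lemma comm_alt (R : fieldType) (B : algType R) (x : B) : commutator x x = 0.
Proof. by rewrite /commutator subrr. Qed.

Lemma comm_jacobi (R : fieldType) (B : algType R) (x y z : B) :
  commutator x (commutator y z) + commutator y (commutator z x)
  + commutator z (commutator x y) = 0.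
Proof.
rewrite /commutator !(mulrBr, mulrBl) !mulrA.
set a := x*y*z; set b := x*z*y; set c := y*z*x; set d := y*x*z;
set e := z*x*y; set f := z*y*x.
rewrite !opprB !addrA.
clearbody a b c d e f. rewrite !subrK.
by rewrite (addrAC _ (-d) b) (addrAC _ f b) subrK (addrAC _ (-d) (-f)) addrK subrK subrr.
Qed.

Definition comm_lie (R : fieldType) (B : algType R) : lie_alg R :=
  @LieAlg R B (@commutator R B) (@comm_brDl R B) (@comm_brDr R B) (@comm_alt R B) (@comm_jacobi R B).


Lemma comm_suml (R : fieldType) (B : algType R) (I : finType) (F : I -> B) z :
  commutator (\sum_i F i) z = \sum_i commutator (F i) z.
Proof. by rewrite /commutator mulr_suml mulr_sumr -sumrB. Qed.

Lemma comm_sumr (R : fieldType) (B : algType R) (I : finType) (F : I -> B) z :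
  commutator z (\sum_i F i) = \sum_i commutator z (F i).
Proof. by rewrite /commutator mulr_suml mulr_sumr -sumrB. Qed.

Lemma comm_scalel (R : fieldType) (B : algType R) (c : R) (x y : B) :
  commutator (c *: x) y = c *: commutator x y.
Proof. by rewrite /commutator scalerBr -scalerAl -scalerAr. Qed.

Lemma comm_scaler (R : fieldType) (B : algType R) (c : R) (x y : B) :
  commutator x (c *: y) = c *: commutator x y.
Proof. by rewrite /commutator scalerBr -scalerAl -scalerAr. Qed.

Lemma comm_mulr (R : fieldType) (B : algType R) (x y z : B) :
  commutator x (y * z) = commutator x y * z + y * commutator x z.
Proof.
rewrite /commutator mulrBl mulrBr !mulrA.
by rewrite addrA subrK.
Qed.

Definition Qm (R : fieldType) (B : algType R) (I : finType) (psi : I -> B)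
  (M : I -> I -> R) : B := \sum_u \sum_v M u v *: (psi u * psi v).

Definition Dm (R : fieldType) (I : finType) (M Q : I -> I -> R) u w :=
  \sum_v (M u v - M v u) * Q v w.

Definition Cm (R : fieldType) (I : finType) (M N Q : I -> I -> R) u z :=
  \sum_w Dm M Q u w * N w z + \sum_x N u x * Dm M Q z x.


Lemma cl1 (R : fieldType) (B : algType R) (I : finType) (psi : I -> B) (Q : I -> I -> R)
  (hQ : forall u v, psi u * psi v + psi v * psi u = (Q u v)%:A) u v w :
  commutator (psi u * psi v) (psi w) = Q v w *: psi u - Q u w *: psi v.
Proof.
have h1 : psi v * psi w = (Q v w)%:A - psi w * psi v.
  rewrite -hQ. rewrite (addrK (psi w * psi v)). done.
have h2 : psi w * psi u = (Q u w)%:A - psi u * psi w.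
  by rewrite -hQ (addrC (psi u * psi w)) (addrK (psi u * psi w)).
rewrite /commutator -mulrA h1 mulrA h2 mulrBr mulrBl mulr_algr mulr_algl !mulrA.
by rewrite opprB addrA subrK.
Qed.

Lemma cl2 (R : fieldType) (B : algType R) (I : finType) (psi : I -> B) (Q : I -> I -> R)
  (hQ : forall u v, psi u * psi v + psi v * psi u = (Q u v)%:A) M w :
  commutator (Qm psi M) (psi w) = \sum_u Dm M Q u w *: psi u.
Proof.
rewrite /Qm comm_suml.
under eq_bigr do rewrite comm_suml.
under eq_bigr do under eq_bigr do rewrite comm_scalel (cl1 hQ) scalerBr !scalerA.
under [RHS]eq_bigr do rewrite /Dm scaler_suml.
under [RHS]eq_bigr do under eq_bigr do rewrite mulrBl scalerBl.
under eq_bigr do rewrite sumrB.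
under [RHS]eq_bigr do rewrite sumrB.
rewrite !sumrB; congr (_ - _).
by rewrite exchange_big.
Qed.

Lemma cl3 (R : fieldType) (B : algType R) (I : finType) (psi : I -> B) (Q : I -> I -> R)
  (hQ : forall u v, psi u * psi v + psi v * psi u = (Q u v)%:A) M N :
  commutator (Qm psi M) (Qm psi N) = Qm psi (Cm M N Q).
Proof.
rewrite {2}/Qm comm_sumr.
under eq_bigr do rewrite comm_sumr.
under eq_bigr do under eq_bigr do rewrite comm_scaler comm_mulr !(cl2 hQ) mulr_suml mulr_sumr scalerDr !scaler_sumr.
under eq_bigr do under eq_bigr do under eq_bigr do rewrite -scalerAl scalerA.
under eq_bigr do rewrite big_split /=. rewrite big_split /=.
rewrite /Qm.
under [RHS]eq_bigr do under eq_bigr do rewrite /Cm scalerDl !scaler_suml.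
under [RHS]eq_bigr do rewrite big_split /=. rewrite [RHS]big_split /=.
congr (_ + _).
  rewrite exchange_big /=; under eq_bigr do rewrite exchange_big /=.
  rewrite exchange_big /=.
  by apply: eq_bigr => u _; apply: eq_bigr => z _; apply: eq_bigr => w _; rewrite mulrC.
apply: eq_bigr => w _; rewrite exchange_big /=.
by apply: eq_bigr => u _; apply: eq_bigr => z _; rewrite -scalerAr scalerA.
Qed.







Definition Mt (R : fieldType) k l (X : 'M[R]_k) (Ga : 'M[R]_l) (u v : 'I_k * 'I_l) : R :=
  X u.1 v.1 * Ga u.2 v.2.
Definition Qq (R : fieldType) k l (G : 'M[R]_k) (u v : 'I_k * 'I_l) : R :=
  G u.1 v.1 * (u.2 == v.2)%:R.

Lemma sum_pair (R : fieldType) (V : zmodType) k l (F : 'I_k * 'I_l -> V) :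
  \sum_v F v = \sum_a \sum_b F (a, b).
Proof. by rewrite pair_bigA; apply: eq_bigr => -[]. Qed.

Lemma sym_entry (R : fieldType) k (X : 'M[R]_k) i j : X^T = X -> X j i = X i j.
Proof. by move=> h; rewrite -{1}h mxE. Qed.

Lemma asym_entry (R : fieldType) k (X : 'M[R]_k) i j : X^T = - X -> X j i = - X i j.
Proof. by move=> h; have := congr1 (fun M : 'M[R]_k => M i j) h; rewrite !mxE. Qed.

Lemma Dm_tens (R : fieldType) k l (X : 'M[R]_k) (Ga : 'M[R]_l) G u w :
  X^T = X -> Ga^T = - Ga ->
  Dm (Mt X Ga) (@Qq R k l G) u w = 2 * ((X *m G) u.1 w.1 * Ga u.2 w.2).
Proof.
move=> hX hG; rewrite /Dm (sum_pair R).
under eq_bigr => a _.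
  rewrite (bigD1 w.2) //= big1 ?addr0; last first.
    by move=> b /negbTE hb; rewrite /Qq /= hb mulr0 mulr0.
  rewrite /Qq /Mt /= eqxx (sym_entry u.1 a hX) (asym_entry u.2 w.2 hG).
  over.
rewrite mxE mulr_suml mulr_sumr; apply: eq_bigr => a _ /=; ring.
Qed.

Lemma Cm_tens (R : fieldType) k l (X X' : 'M[R]_k) (Ga Ga' : 'M[R]_l) G u z :
  X^T = X -> Ga^T = - Ga -> G^T = G ->
  Cm (Mt X Ga) (Mt X' Ga') (@Qq R k l G) u z =
  2 * ((X *m G *m X') u.1 z.1 * (Ga *m Ga') u.2 z.2
       - (X' *m G *m X) u.1 z.1 * (Ga' *m Ga) u.2 z.2).
Proof.
move=> hX hGa hG; rewrite /Cm.
have h1 : \sum_w Dm (Mt X Ga) (@Qq R k l G) u w * Mt X' Ga' w z =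
    2 * ((X *m G *m X') u.1 z.1 * (Ga *m Ga') u.2 z.2).
  under eq_bigr do rewrite Dm_tens //.
  rewrite (sum_pair R) [(X *m G *m X') _ _]mxE [(Ga *m Ga') _ _]mxE mulr_suml mulr_sumr.
  apply: eq_bigr => a _; rewrite !mulr_sumr; apply: eq_bigr => b _; rewrite /Mt /=; ring.
have h2 : \sum_x Mt X' Ga' u x * Dm (Mt X Ga) (@Qq R k l G) z x =
    - 2 * ((X' *m G *m X) u.1 z.1 * (Ga' *m Ga) u.2 z.2).
  under eq_bigr do rewrite Dm_tens //.
  rewrite (sum_pair R) -mulmxA [(X' *m _) _ _]mxE [(Ga' *m Ga) _ _]mxE mulr_suml mulr_sumr.
  apply: eq_bigr => a _; rewrite !mulr_sumr; apply: eq_bigr => b _; rewrite /Mt /=.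
  have -> : (X *m G) z.1 a = (G *m X) a z.1.
    by have := congr1 (fun M : 'M[R]_k => M a z.1) (trmx_mul X G); rewrite hX hG mxE.
  rewrite (asym_entry b z.2 hGa); ring.
by rewrite h1 h2; ring.
Qed.






Lemma Jhat_Qm (R : fieldType) (B : algType R) k l (phi : 'I_k -> 'I_l -> B) Xa Ga :
  Jhat phi Xa Ga = Qm (fun u : 'I_k * 'I_l => phi u.1 u.2) (Mt Xa Ga).
Proof.
rewrite /Jhat /Qm (sum_pair R); apply: eq_bigr => a _.
rewrite exchange_big; apply: eq_bigr => g _; rewrite (sum_pair R) /=.
by apply: eq_bigr => b _; apply: eq_bigr => d _; rewrite /Mt.
Qed.

Lemma Qm_ext (R : fieldType) (B : algType R) (I : finType) (psi : I -> B) M N :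
  (forall u v, M u v = N u v) -> Qm psi M = Qm psi N.
Proof. by move=> h; apply: eq_bigr => u _; apply: eq_bigr => v _; rewrite h. Qed.

Lemma Qm_opp (R : fieldType) (B : algType R) (I : finType) (psi : I -> B) M :
  Qm psi (fun u v => - M u v) = - Qm psi M.
Proof.
rewrite /Qm -sumrN; apply: eq_bigr => u _; rewrite -sumrN; apply: eq_bigr => v _.
by rewrite scaleNr.
Qed.

Lemma Qm_zero (R : fieldType) (B : algType R) (I : finType) (psi : I -> B) :
  Qm psi (fun u v => 0) = 0.
Proof. by rewrite /Qm big1 // => u _; rewrite big1 // => v _; rewrite scale0r. Qed.

Lemma spin_rel (R : realFieldType) l (a b : 'M[R]_l) :
  a *m a = - (4%:R^-1 *: 1%:M) ->
  a *m (a *m b - b *m a) - (a *m b - b *m a) *m a = - b ->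
  a *m b *m a = 4%:R^-1 *: b /\ a *m b = - (b *m a).
Proof.
move=> haa rel.
have e1 : a *m (a *m b) = - (4%:R^-1 *: b) by rewrite mulmxA haa mulNmx -scalemxAl mul1mx.
have e2 : b *m a *m a = - (4%:R^-1 *: b) by rewrite -mulmxA haa mulmxN -scalemxAr mulmx1.
rewrite mulmxBr mulmxBl e1 e2 mulmxA in rel.
have ht : a *m b *m a = 4%:R^-1 *: b.
  move: rel; move: (a *m b *m a) => t rel.
  apply/matrixP => i j; have := congr1 (fun M : 'M[R]_l => M i j) rel.
  rewrite !mxE => h; lra.
split=> //.
have h3 : a *m (a *m b *m a) = - (4%:R^-1 *: (b *m a)).
  by rewrite !mulmxA haa !mulNmx -!scalemxAl mul1mx.
rewrite ht -scalemxAr in h3.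
move: h3; move: (a *m b) (b *m a) => x y h3.
apply/matrixP => i j; have := congr1 (fun M : 'M[R]_l => M i j) h3.
rewrite !mxE => h; lra.
Qed.


Lemma entryD (R : fieldType) m (A B : 'M[R]_m) i j : (A + B) i j = A i j + B i j.
Proof. by rewrite mxE. Qed.
Lemma entryN (R : fieldType) m (A : 'M[R]_m) i j : (- A) i j = - A i j.
Proof. by rewrite mxE. Qed.
Lemma entryZ (R : fieldType) m (c : R) (A : 'M[R]_m) i j : (c *: A) i j = c * A i j.
Proof. by rewrite mxE. Qed.

Lemma rf_simple n (A : 'M[int]_n) i j :
  rootform A (simple_root i) (simple_root j) = A i j.
Proof.
rewrite /rootform (bigD1 i) //= [X in _ + X]big1 ?addr0; last first.
  by move=> a /negbTE ha; rewrite big1 // => b _; rewrite /simple_root !mxE ha /= !mul0r.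
rewrite (bigD1 j) //= big1 ?addr0; last first.
  by move=> b /negbTE hb; rewrite /simple_root !mxE hb /= mulr0.
by rewrite /simple_root !mxE !eqxx /= mul1r mulr1.
Qed.

Lemma rf_addl n (A : 'M[int]_n) a1 a2 be :
  rootform A (a1 + a2) be = rootform A a1 be + rootform A a2 be.
Proof.
rewrite /rootform -big_split; apply: eq_bigr => i _.
rewrite -big_split; apply: eq_bigr => j _; by rewrite mxE /= !mulrDl.
Qed.

Lemma gcm_sym n (A : 'M[int]_n) : simply_laced_gcm A -> forall i j, A j i = A i j.
Proof.
move=> [h1 [h2 h3]] i j.
have [->|hij] := eqVneq i j; first by [].
have hji : j != i by rewrite eq_sym.
have := h3 i j.
case: (h2 i j hij) => ->; case: (h2 j i hji) => -> //.
Qed.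

Lemma Ga_anti (R : realFieldType) l (a b : 'M[R]_l) :
  a *m a = - (4%:R^-1 *: 1%:M) ->
  a *m (a *m b - b *m a) - (a *m b - b *m a) *m a = - b ->
  (2%:R *: a) *m (2%:R *: b) = - ((2%:R *: b) *m (2%:R *: a)) /\
  (2%:R *: a) *m (2%:R *: b) *m (2%:R *: a) = 2%:R *: b.
Proof.
move=> haa rel; have [h1 h2] := spin_rel haa rel.
split.
  by rewrite -!scalemxAl -!scalemxAr !scalerA h2 scalerN.
rewrite -!scalemxAl -!scalemxAr !scalerA -scalemxAl h1 !scalerA.
congr (_ *: _); lra.

Qed.

Lemma Ga_sq (R : realFieldType) l (a : 'M[R]_l) :
  a *m a = - (4%:R^-1 *: 1%:M) -> (2%:R *: a) *m (2%:R *: a) = - 1%:M.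
Proof.
move=> haa; rewrite -!scalemxAl -!scalemxAr !scalerA haa scalerN scalerA.
have -> : (2%:R * 2%:R * 4%:R^-1 : R) = 1 by lra.
by rewrite scale1r.
Qed.

Lemma Ga_comm (R : realFieldType) l (a b : 'M[R]_l) :
  a *m b - b *m a = 0 -> (2%:R *: a) *m (2%:R *: b) = (2%:R *: b) *m (2%:R *: a).
Proof.
move=> h; rewrite -!scalemxAl -!scalemxAr !scalerA (subr0_eq h) //.
Qed.

Lemma alg1 (R : realFieldType) (a b c d : R) :
  a + b = 2%:R^-1 * c -> 2%:R * (a * d - b * - d) = c * d.
Proof. move=> e; have -> : c = 2%:R * (a + b) by lra. ring. Qed.

Lemma alg2 (R : realFieldType) (a b c d : R) :
  b + a = 2%:R^-1 * c -> 2%:R * (a * - d - b * d) = - (c * d).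
Proof. move=> e; have -> : c = 2%:R * (b + a) by lra. ring. Qed.

Unset Implicit Arguments.

Theorem proposition3p5
  (R : realType) (n : nat) (A : 'M[int]_n) (HA : simply_laced_gcm A)
  (K : lie_alg R) (Xk : 'I_n -> K) (HK : is_presented_k A Xk)
  (l : nat) (rho : K -> 'M[R]_l)
  (Hrho : lie_morph (fun M N : 'M[R]_l => M *m N - N *m M) rho)
  (Hspin : forall i, rho (Xk i) *m rho (Xk i) = - (4%:R^-1 *: 1%:M))
  (Hanti : forall i, (rho (Xk i))^T = - rho (Xk i))
  (k : nat) (G : 'M[R]_k) (HGsym : G^T = G) (HGnd : G \in unitmx)
  (X : 'rV[int]_n -> 'M[R]_k)
  (HXsym : forall al, in_lambda A al -> (X al)^T = X al)
  (HX0 : forall al be, in_lambda A al -> in_lambda A be ->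
     rootform A al be = 0 -> brG G (X al) (X be) = 0)
  (HXm : forall al be, in_lambda A al -> in_lambda A be ->
     rootform A al be = -1 -> in_lambda A (al + be) ->
     acomG G (X al) (X be) = 2%:R^-1 *: X (al + be))
  (HXp : forall al be, in_lambda A al -> in_lambda A be ->
     rootform A al be = 1 -> in_lambda A (al - be) ->
     acomG G (X al) (X be) = 2%:R^-1 *: X (al - be))
  (Aalg : algType R) (phi : 'I_k -> 'I_l -> Aalg) (HAalg : is_clifford G phi) :
  exists sigma : K -> Aalg,
    lie_morph (@commutator R Aalg) sigma /\
    forall i, sigma (Xk i) = Jhat phi (X (simple_root i)) (2%:R *: rho (Xk i)).
Proof.
have [HK1 HK2] := HK.
have [Hcl _] := HAalg.
pose psi := fun u : 'I_k * 'I_l => phi u.1 u.2.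
have hQ : forall u v, psi u * psi v + psi v * psi u = (@Qq R k l G u v)%:A.
  by move=> u v; exact: Hcl.
pose Ga := fun i => 2%:R *: rho (Xk i).
pose J := fun i => Jhat phi (X (simple_root i)) (Ga i).
have hJ : forall i, J i = Qm psi (Mt (X (simple_root i)) (Ga i)).
  by move=> i; rewrite /J Jhat_Qm.
have [Hlin Hbr] := Hrho.
have rho0 : rho 0 = 0.
  have := Hlin 1 0 0; rewrite !scale1r !addr0 => h.
  by apply: (addrI (rho 0)); rewrite -h addr0.
have rhoN : forall x, rho (- x) = - rho x.
  by move=> x; have := Hlin (-1) x 0; rewrite addr0 rho0 addr0 scaleN1r => ->; rewrite scaleN1r.
have GaT : forall i, (Ga i)^T = - Ga i.
  move=> i; apply/matrixP => a b; rewrite /Ga !mxE.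
  have := congr1 (fun M : 'M[R]_l => M a b) (Hanti i); rewrite !mxE => ->; by rewrite mulrN.
have GaGa : forall i, Ga i *m Ga i = - 1%:M by move=> i; apply: Ga_sq.
have inl1 : forall i, in_lambda A (simple_root i).
  by move=> i; apply/orP; left; apply/existsP; exists i.
have inl2 : forall i j, A i j = -1 -> in_lambda A (simple_root i + simple_root j).
  by move=> i j h; apply/orP; right; apply/existsP; exists i; apply/existsP; exists j; rewrite h !eqxx.
have [HA1 [HA2 HA3]] := HA.
have Xsym : forall i, (X (simple_root i))^T = X (simple_root i).
  by move=> i; apply: HXsym.
have rel0 : forall i j, A i j = 0 -> commutator (J i) (J j) = 0.
  move=> i j hij; rewrite !hJ (cl3 hQ).
  have hX := HX0 _ _ (inl1 i) (inl1 j) (etrans (rf_simple A i j) hij).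
  rewrite /brG in hX; move/subr0_eq: hX => hX.
  have hG : Ga i *m Ga j = Ga j *m Ga i.
    apply: Ga_comm; have [_ h] := HK1 i j; have := congr1 rho (h hij).
    by rewrite Hbr rho0.
  rewrite -(Qm_zero psi); apply: Qm_ext => u v.
  by rewrite Cm_tens ?Xsym ?GaT // hX hG subrr mulr0.
have relm : forall i j, A i j = -1 ->
    commutator (J i) (commutator (J i) (J j)) = - J j.
  move=> i j hij.
  have hji : A j i = -1 by rewrite (gcm_sym HA).
  have [hanti hGGG] : Ga i *m Ga j = -(Ga j *m Ga i) /\ Ga i *m Ga j *m Ga i = Ga j.
    apply: Ga_anti; first exact: Hspin.
    have [h _] := HK1 i j; have := congr1 rho (h hij).
    by rewrite !Hbr rhoN.
  have hanti' : Ga j *m Ga i = -(Ga i *m Ga j) by rewrite hanti opprK.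
  set Xij := X (simple_root i + simple_root j).
  have step1 : commutator (J i) (J j) = Qm psi (Mt Xij (Ga i *m Ga j)).
    rewrite !hJ (cl3 hQ); apply: Qm_ext => u v; rewrite Cm_tens ?Xsym ?GaT //.
    have := HXm _ _ (inl1 i) (inl1 j) (etrans (rf_simple A i j) hij) (inl2 i j hij).
    rewrite /acomG => /(congr1 (fun M : 'M[R]_k => M u.1 v.1)); rewrite entryD entryZ -/Xij => e.
    rewrite hanti' entryN /Mt.
    exact: alg1.
  have hd : simple_root i + simple_root j - simple_root i = simple_root j.
    by rewrite addrC addKr.
  have hrf : rootform A (simple_root i + simple_root j) (simple_root i) = 1.
    by rewrite rf_addl !rf_simple HA1 hji.
  have step2 : commutator (J i) (Qm psi (Mt Xij (Ga i *m Ga j))) = - J j.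
    rewrite hJ (cl3 hQ) hJ -Qm_opp; apply: Qm_ext => u v; rewrite Cm_tens ?Xsym ?GaT //.
    have e1 : Ga i *m (Ga i *m Ga j) = - Ga j by rewrite mulmxA GaGa mulNmx mul1mx.
    rewrite e1 hGGG entryN.
    have := HXp _ _ (inl2 i j hij) (inl1 i) hrf (etrans (congr1 (in_lambda A) hd) (inl1 j)).
    rewrite hd /acomG => /(congr1 (fun M : 'M[R]_k => M u.1 v.1)); rewrite entryD entryZ -/Xij => e.
    rewrite /Mt; exact: alg2.
  by rewrite step1 step2.
pose L := comm_lie Aalg.
have hrel : k_relations A (L:=L) J.
  by move=> i j; split => h; [exact: relm | exact: rel0].
have [f [[hf1 hf2] _]] := HK2 L J hrel.
by exists f; split.
Qed.
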